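(* For any solution $(w,F)\in X\times\mathbb R$ of the height equation, with $h=H+w$ and $\eta(q)=w(q,0)$, $$\int_{-M}^M\int_{-1}^0\frac{H_p^3w_q^2+(H_p+2h_p)w_p^2}{2h_p^2H_p^3}\,\Phi_p\Big(p;\frac1{F^2}\Big)\,dp\,dq+A\Big(\frac1{F^2}\Big)\int_{-M}^M\eta(q)\,dq\longrightarrow0\quad\text{as }M\to\infty.$$
   Context: Fix $\alpha\in(0,1)$, $\rho\in C^{2+\alpha}([-1,0])$ with $\rho>0$, $\rho_p\le0$, and $H\in C^{3+\alpha}([-1,0])$ with $H(-1)=0$, $H(0)=1$, $H_p>0$. Let $R=\mathbb R\times(-1,0)$ (coordinates $(q,p)$), $T=\mathbb R\times\{0\}$, $B=\mathbb R\times\{-1\}$. $(w,F)$ solves the height equation if $h=H+w$ satisfies $\big(-\frac{1+h_q^2}{2h_p^2}+\frac1{2H_p^2}\big)_p+\big(\frac{h_q}{h_p}\big)_q-\frac1{F^2}\rho_p(h-H)=0$ in $R$, $\frac{1+h_q^2}{2h_p^2}-\frac1{2H_p^2}+\frac1{F^2}\rho(h-1)=0$ on $T$, $h=0$ on $B$, and $0<\inf_R(H_p+w_p)<\infty$. $X$: $w\in C^{3+\alpha}(\overline R)$ of finite norm, even in $q$, with $w$ and derivatives of order $\le2$ tending to $0$ uniformly as $|q|\to\infty$, $w=0$ on $B$. For $\mu\ge0$, $\Phi(\cdot;\mu)$ solves $(\Phi_p/H_p^3)_p-\mu\rho_p\Phi=0$ on $(-1,0)$, $\Phi(-1)=0$,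 $\Phi_p(-1)=1$, and $A(\mu)=-\Phi_p(0;\mu)/H_p(0)^3+\mu\rho(0)\Phi(0;\mu)$. *)

(* Defs.v *)
From Stdlib Require Import Reals List.
From Coquelicot Require Import Coquelicot.
Open Scope R_scope.

(* ---------- one-dimensional Hölder spaces C^{k+alpha}([a,b]) ----------
   A function on [a,b] is represented by a function f : R -> R (an
   extension of it; only the values on [a,b] matter). *)
Definition hoelder1 (k : nat) (alpha : R) (f : R -> R) (a b : R) : Prop :=
  (forall n, (n < k)%nat -> forall x, ex_derive (Derive_n f n) x) /\
  exists C : R,
    (forall n, (n <= k)%nat -> forall x, a <= x <= b ->
        Rabs (Derive_n f n x) <= C) /\
    (forall x y, a <= x <= b -> a <= y <= b ->
        Rabs (Derive_n f k x - Derive_n f k y) <= C * Rpower (Rabs (x - y)) alpha).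

Definition d_q (f : R -> R -> R) : R -> R -> R :=
  fun q p => Derive (fun x => f x p) q.
Definition d_p (f : R -> R -> R) : R -> R -> R :=
  fun q p => Derive (fun y => f q y) p.

(* iterated partial derivative; [true] = d/dq, [false] = d/dp;
   the head of the list is applied last *)
Fixpoint pder (s : list bool) (f : R -> R -> R) : R -> R -> R :=
  match s with
  | nil => f
  | b :: s' => if b then d_q (pder s' f) else d_p (pder s' f)
  end.

(* closed strip  R-bar = R x [-1,0] *)
Definition in_strip (p : R) : Prop := -1 <= p <= 0.

Definition dist2 (q1 p1 q2 p2 : R) : R := sqrt ((q1 - q2)^2 + (p1 - p2)^2).

Definition hoelder_strip3 (alpha : R) (w : R -> R -> R) : Prop :=
  (forall s, (length s < 3)%nat -> forall q p,
      ex_derive (fun x => pder s w x p) q /\ ex_derive (fun y => pder s w q y) p) /\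
  exists C : R,
    (forall s, (length s <= 3)%nat -> forall q p, in_strip p ->
        Rabs (pder s w q p) <= C) /\
    (forall s, length s = 3%nat -> forall q1 p1 q2 p2, in_strip p1 -> in_strip p2 ->
        Rabs (pder s w q1 p1 - pder s w q2 p2) <= C * Rpower (dist2 q1 p1 q2 p2) alpha).

Definition in_X (alpha : R) (w : R -> R -> R) : Prop :=
  hoelder_strip3 alpha w /\
  (forall q p, in_strip p -> w (- q) p = w q p) /\
  (forall eps, 0 < eps -> exists K, forall s, (length s <= 2)%nat ->
      forall q p, K < Rabs q -> in_strip p -> Rabs (pder s w q p) < eps) /\
  (forall q, w q (-1) = 0).

Definition height_eq (rho H : R -> R) (w : R -> R -> R) (F : R) : Prop :=
  let h := fun q p => H p + w q p in
  let Hp := Derive H in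
  (forall q p, -1 < p < 0 ->
     Derive (fun y => - (1 + (d_q h q y)^2) / (2 * (d_p h q y)^2)
                      + 1 / (2 * (Hp y)^2)) p
     + Derive (fun x => d_q h x p / d_p h x p) q
     - / F^2 * Derive rho p * (h q p - H p) = 0) /\
  (forall q, (1 + (d_q h q 0)^2) / (2 * (d_p h q 0)^2) - 1 / (2 * (Hp 0)^2)
             + / F^2 * rho 0 * (h q 0 - 1) = 0) /\
  (forall q, h q (-1) = 0) /\
  (exists c, 0 < c /\ forall q p, -1 < p < 0 -> c <= Hp p + d_p w q p).

Definition is_Phi (rho H : R -> R) (mu : R) (Phi : R -> R) : Prop :=
  (forall x, ex_derive Phi x) /\
  (forall x, -1 < x < 0 ->
     ex_derive (fun y => Derive Phi y / (Derive H y)^3) x /\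
     Derive (fun y => Derive Phi y / (Derive H y)^3) x
       - mu * Derive rho x * Phi x = 0) /\
  Phi (-1) = 0 /\ Derive Phi (-1) = 1.

Definition A_coef (rho H : R -> R) (mu : R) (Phi : R -> R) : R :=
  - Derive Phi 0 / (Derive H 0)^3 + mu * rho 0 * Phi 0.

(* Main.v *)
Require Import Defs.
From Stdlib Require Import Reals List Lra Lia.
From Coquelicot Require Import Coquelicot.
Open Scope R_scope.


Lemma cont_eps (f : R -> R) x : continuity_pt f x ->
  forall e, 0 < e -> exists d, 0 < d /\ forall y, Rabs (y - x) < d -> Rabs (f y - f x) < e.
Proof.
  intros Hc e He. destruct (Hc e He) as [d [Hd H]]. exists d; split; auto.
  intros y Hy. destruct (Req_dec y x) as [->|Hne].
  - rewrite Rminus_diag, Rabs_R0; auto.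
  - apply (H y). split; [split; auto | exact Hy]. exact I.
Qed.

Lemma lip_cont (f : R -> R) x L : 0 <= L ->
  (forall y, Rabs (f y - f x) <= L * Rabs (y - x)) -> continuity_pt f x.
Proof.
  intros HL H e He. exists (e / (L + 1)). split.
  - apply Rdiv_lt_0_compat; lra.
  - intros y [_ Hy]. unfold R_dist in *. eapply Rle_lt_trans; [apply H|].
    assert (e / (L+1) * (L+1) = e) by (field; lra).
    assert (0 <= Rabs (y - x)) by apply Rabs_pos.
    change (Rabs (y - x) < e / (L+1)) in Hy.
    set (t := e / (L+1)) in *. set (u := Rabs (y - x)) in *.
    assert ((L+1) * (t - u) > 0) by (apply Rmult_gt_0_compat; lra). nra.
Qed.

Lemma eq_eps x y : (forall e, 0 < e -> Rabs (x - y) <= e) -> x = y.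
Proof.
  intros H. destruct (Req_dec x y) as [|Hne]; auto.
  assert (0 < Rabs (x - y)) by (apply Rabs_pos_lt; lra).
  specialize (H (Rabs (x-y) / 2)). lra.
Qed.

Lemma lip_mvt (f df : R -> R) x y K : x <= y ->
  (forall t, x <= t <= y -> is_derive f t (df t)) ->
  (forall t, x <= t <= y -> Rabs (df t) <= K) ->
  Rabs (f y - f x) <= K * (y - x).
Proof.
  intros Hxy Hd Hb. destruct Hxy as [Hlt|Heq].
  - destruct (MVT_cor2 f df x y Hlt) as [c [Hc Hc2]].
    + intros c Hc. apply is_derive_Reals, Hd; auto.
    + rewrite Hc, Rabs_mult, (Rabs_right (y - x)) by lra.
      apply Rmult_le_compat_r; [lra|]. apply Hb; lra.
  - subst. rewrite !Rminus_diag, Rabs_R0. lra.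
Qed.

Lemma lip_mvt2 (f df : R -> R) a b x y K : a <= x <= b -> a <= y <= b ->
  (forall t, a <= t <= b -> is_derive f t (df t)) ->
  (forall t, a <= t <= b -> Rabs (df t) <= K) ->
  Rabs (f x - f y) <= K * Rabs (x - y).
Proof.
  intros Hx Hy Hd Hb. destruct (Rle_dec y x).
  - rewrite (Rabs_right (x - y)) by lra. apply lip_mvt with df; auto.
    intros t Ht; apply Hd; lra. intros t Ht; apply Hb; lra.
  - rewrite Rabs_minus_sym, (Rabs_left (x - y)) by lra.
    replace (- (x - y)) with (y - x) by ring. apply lip_mvt with df; try lra.
    intros t Ht; apply Hd; lra. intros t Ht; apply Hb; lra.
Qed.

Lemma approx_deriv (f : R -> R) a b : a < b -> (forall x, ex_derive f x) ->
  forall x, a <= x <= b -> forall e, 0 < e ->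
  exists z, a < z < b /\ Rabs (z - x) < e /\ Rabs (Derive f z - Derive f x) < e.
Proof.
  intros Hab Hf x Hx e He.
  assert (Hd : forall t, is_derive f t (Derive f t)) by (intro t; apply Derive_correct, Hf).
  destruct (Req_dec x b) as [Hb|Hnb]; [|destruct (Req_dec x a) as [Ha|Hna]].
  - subst x. pose proof (proj1 (is_derive_Reals _ _ _) (Hd b) e He) as [d Hdl].
    set (h := Rmin d (Rmin e (b - a)) / 2).
    assert (Hh : 0 < h /\ h < d /\ h < e /\ h < b - a).
    { unfold h. destruct d as [d dpos]; simpl.
      assert (H1 := Rmin_l d (Rmin e (b - a))). assert (H2 := Rmin_r d (Rmin e (b - a))).
      assert (H3 := Rmin_l e (b - a)). assert (H4 := Rmin_r e (b - a)).
      assert (0 < Rmin d (Rmin e (b - a))) by (repeat apply Rmin_glb_lt; lra). lra. }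
    destruct (MVT_cor2 f (Derive f) (b - h) b) as [c [Hc Hc2]]; [lra| |].
    { intros c _. apply is_derive_Reals, Hd. }
    exists c. split; [lra|]. split; [rewrite Rabs_left; lra|].
    assert (Hq := Hdl (- h) ltac:(lra) ltac:(rewrite Rabs_left; lra)).
    replace (b + - h) with (b - h) in Hq by ring.
    replace ((f (b - h) - f b) / - h) with (Derive f c) in Hq; auto.
    field_simplify_eq; [|lra]. lra.
  - subst x. pose proof (proj1 (is_derive_Reals _ _ _) (Hd a) e He) as [d Hdl].
    set (h := Rmin d (Rmin e (b - a)) / 2).
    assert (Hh : 0 < h /\ h < d /\ h < e /\ h < b - a).
    { unfold h. destruct d as [d dpos]; simpl.
      assert (H1 := Rmin_l d (Rmin e (b - a))). assert (H2 := Rmin_r d (Rmin e (b - a))).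
      assert (H3 := Rmin_l e (b - a)). assert (H4 := Rmin_r e (b - a)).
      assert (0 < Rmin d (Rmin e (b - a))) by (repeat apply Rmin_glb_lt; lra). lra. }
    destruct (MVT_cor2 f (Derive f) a (a + h)) as [c [Hc Hc2]]; [lra| |].
    { intros c _. apply is_derive_Reals, Hd. }
    exists c. split; [lra|]. split; [rewrite Rabs_right; lra|].
    assert (Hq := Hdl h ltac:(lra) ltac:(rewrite Rabs_right; lra)).
    replace ((f (a + h) - f a) / h) with (Derive f c) in Hq; auto.
    field_simplify_eq; [|lra]. lra.
  - exists x. split; [lra|]. rewrite !Rminus_diag, Rabs_R0. lra.
Qed.

Lemma lip_ext (f : R -> R) a b L : a < b -> 0 <= L -> (forall x, ex_derive f x) ->
  (forall x y, a < x < b -> a < y < b -> Rabs (Derive f x - Derive f y) <= L * Rabs (x - y)) ->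
  forall x y, a <= x <= b -> a <= y <= b -> Rabs (Derive f x - Derive f y) <= L * Rabs (x - y).
Proof.
  intros Hab HL Hf Hl x y Hx Hy. apply le_epsilon. intros eps Heps.
  set (e := eps / (2 + 2 * L)).
  assert (He : 0 < e) by (apply Rdiv_lt_0_compat; lra).
  destruct (approx_deriv f a b Hab Hf x Hx e He) as [z1 [Hz1 [Hz1a Hz1b]]].
  destruct (approx_deriv f a b Hab Hf y Hy e He) as [z2 [Hz2 [Hz2a Hz2b]]].
  assert (H12 := Hl z1 z2 Hz1 Hz2).
  assert (Rabs (z1 - z2) <= Rabs (x - y) + 2 * e).
  { replace (z1 - z2) with ((z1 - x) + (x - y) + (y - z2)) by ring.
    eapply Rle_trans; [apply Rabs_triang|]. eapply Rle_trans; [apply Rplus_le_compat_r, Rabs_triang|].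
    rewrite (Rabs_minus_sym y z2). lra. }
  assert (Hsum : Rabs (Derive f x - Derive f y) <= e + L * Rabs (z1 - z2) + e).
  { replace (Derive f x - Derive f y) with
      (-(Derive f z1 - Derive f x) + (Derive f z1 - Derive f z2) + (Derive f z2 - Derive f y)) by ring.
    eapply Rle_trans; [apply Rabs_triang|]. eapply Rle_trans; [apply Rplus_le_compat_r, Rabs_triang|].
    rewrite Rabs_Ropp. assert (Rabs (Derive f z2 - Derive f y) <= e).
    { lra. }
    lra. }
  assert (L * Rabs (z1 - z2) <= L * (Rabs (x - y) + 2 * e)) by (apply Rmult_le_compat_l; lra).
  assert (e * (2 + 2 * L) = eps) by (unfold e; field; lra).
  nra.
Qed.

Lemma ge_left (f : R -> R) a b c : a < b -> continuity_pt f a ->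
  (forall x, a < x < b -> c <= f x) -> c <= f a.
Proof.
  intros Hab Hc Hge. destruct (Rle_dec c (f a)) as [|Hn]; auto. exfalso.
  destruct (cont_eps f a Hc (c - f a) ltac:(lra)) as [d [Hd Hy]].
  set (x := a + Rmin d (b - a) / 2).
  assert (H1 := Rmin_l d (b - a)). assert (H2 := Rmin_r d (b - a)).
  assert (0 < Rmin d (b - a)) by (apply Rmin_glb_lt; lra).
  specialize (Hy x ltac:(unfold x; rewrite Rabs_right; lra)).
  specialize (Hge x ltac:(unfold x; lra)).
  assert (f x - f a < c - f a) by (eapply Rle_lt_trans; [apply Rle_abs|exact Hy]). lra.
Qed.

Lemma ge_right (f : R -> R) a b c : a < b -> continuity_pt f b ->
  (forall x, a < x < b -> c <= f x) -> c <= f b.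
Proof.
  intros Hab Hc Hge. destruct (Rle_dec c (f b)) as [|Hn]; auto. exfalso.
  destruct (cont_eps f b Hc (c - f b) ltac:(lra)) as [d [Hd Hy]].
  set (x := b - Rmin d (b - a) / 2).
  assert (H1 := Rmin_l d (b - a)). assert (H2 := Rmin_r d (b - a)).
  assert (0 < Rmin d (b - a)) by (apply Rmin_glb_lt; lra).
  specialize (Hy x ltac:(unfold x; rewrite Rabs_left; lra)).
  specialize (Hge x ltac:(unfold x; lra)).
  assert (f x - f b < c - f b) by (eapply Rle_lt_trans; [apply Rle_abs|exact Hy]). lra.
Qed.

Lemma ftc_open (f ft df : R -> R) a b : a < b ->
  (forall x, a < x < b -> is_derive f x (df x)) ->
  (forall x, continuous df x) ->
  (forall x, a <= x <= b -> f x = ft x) ->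
  continuity_pt ft a -> continuity_pt ft b ->
  RInt df a b = f b - f a.
Proof.
  intros Hab Hf Hc Heq Hca Hcb.
  set (G := fun x => RInt df a x).
  assert (HG : forall x, is_derive G x (df x)).
  { intro x. apply is_derive_RInt with a. apply filter_forall. intro y.
    apply RInt_correct, ex_RInt_continuous. intros; apply Hc. apply Hc. }
  assert (HGc : forall x, continuity_pt G x).
  { intro x. apply continuity_pt_filterlim.
    exact (ex_derive_continuous (K := R_AbsRing) (V := R_NormedModule) G x (ex_intro _ (df x) (HG x))). }
  set (K := fun x => f x - G x).
  assert (HK0 : forall x y, a < x < b -> a < y < b -> x <= y -> K y = K x).
  { intros x y Hx Hy Hxy.
    assert (Rabs (K y - K x) <= 0 * (y - x)).
    { apply lip_mvt with (fun _ => 0); auto.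
      - intros t Ht. unfold K. 
        assert (Hm := is_derive_minus _ _ _ _ _ (Hf t ltac:(lra)) (HG t)).
        replace 0 with (minus (df t) (df t)). exact Hm.
        unfold minus, plus, opp; simpl; ring.
      - intros; rewrite Rabs_R0; lra. }
    rewrite Rmult_0_l in H. assert (Rabs (K y - K x) = 0) by (apply Rle_antisym; auto; apply Rabs_pos).
    apply Rabs_eq_0 in H0. lra. }
  assert (HK : forall x y, a < x < b -> a < y < b -> K y = K x).
  { intros x y Hx Hy. destruct (Rle_dec x y). apply HK0; auto. symmetry; apply HK0; auto; lra. }
  set (m := (a + b) / 2).
  assert (Kb : K b = K m).
  { apply eq_eps. intros e He.
    destruct (cont_eps ft b Hcb (e/2) ltac:(lra)) as [d1 [Hd1 H1]].
    destruct (cont_eps G b (HGc b) (e/2) ltac:(lra)) as [d2 [Hd2 H2]].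
    set (r := Rmin d1 (Rmin d2 (b - a))).
    assert (Hr1 := Rmin_l d1 (Rmin d2 (b - a))). assert (Hr2 := Rmin_r d1 (Rmin d2 (b - a))).
    assert (Hr3 := Rmin_l d2 (b - a)). assert (Hr4 := Rmin_r d2 (b - a)).
    assert (0 < r) by (unfold r; repeat apply Rmin_glb_lt; lra). fold r in Hr1, Hr2.
    set (x := b - r / 2).
    assert (Hx : a < x < b) by (unfold x; lra).
    rewrite (HK x m Hx ltac:(unfold m; lra)).
    specialize (H1 x ltac:(unfold x; rewrite Rabs_left; lra)).
    specialize (H2 x ltac:(unfold x; rewrite Rabs_left; lra)).
    unfold K. rewrite (Heq b ltac:(lra)), (Heq x ltac:(lra)).
    replace (ft b - G b - (ft x - G x)) with (-(ft x - ft b) + (G x - G b)) by ring.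
    eapply Rle_trans; [apply Rabs_triang|]. rewrite Rabs_Ropp. lra. }
  assert (Ka : K a = K m).
  { apply eq_eps. intros e He.
    destruct (cont_eps ft a Hca (e/2) ltac:(lra)) as [d1 [Hd1 H1]].
    destruct (cont_eps G a (HGc a) (e/2) ltac:(lra)) as [d2 [Hd2 H2]].
    set (r := Rmin d1 (Rmin d2 (b - a))).
    assert (Hr1 := Rmin_l d1 (Rmin d2 (b - a))). assert (Hr2 := Rmin_r d1 (Rmin d2 (b - a))).
    assert (Hr3 := Rmin_l d2 (b - a)). assert (Hr4 := Rmin_r d2 (b - a)).
    assert (0 < r) by (unfold r; repeat apply Rmin_glb_lt; lra). fold r in Hr1, Hr2.
    set (x := a + r / 2).
    assert (Hx : a < x < b) by (unfold x; lra).
    rewrite (HK x m Hx ltac:(unfold m; lra)).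
    specialize (H1 x ltac:(unfold x; rewrite Rabs_right; lra)).
    specialize (H2 x ltac:(unfold x; rewrite Rabs_right; lra)).
    unfold K. rewrite (Heq a ltac:(lra)), (Heq x ltac:(lra)).
    replace (ft a - G a - (ft x - G x)) with (-(ft x - ft a) + (G x - G a)) by ring.
    eapply Rle_trans; [apply Rabs_triang|]. rewrite Rabs_Ropp. lra. }
  assert (HGa : G a = 0) by (unfold G; rewrite RInt_point; reflexivity).
  unfold K in Ka, Kb. change (RInt df a b) with (G b). lra.
Qed.

Definition clamp (p : R) : R := Rmax (-1) (Rmin p 0).

Lemma clamp_in p : -1 <= clamp p <= 0.
Proof. unfold clamp, Rmax, Rmin. repeat destruct Rle_dec; lra. Qed.

Lemma clamp_id p : -1 <= p <= 0 -> clamp p = p.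
Proof. intros. unfold clamp, Rmax, Rmin. repeat destruct Rle_dec; lra. Qed.

Lemma clamp_lip x y : Rabs (clamp x - clamp y) <= Rabs (x - y).
Proof. unfold clamp, Rmax, Rmin. repeat destruct Rle_dec; split_Rabs; lra. Qed.

Lemma clamp_cont (f : R -> R) :
  (forall p, -1 <= p <= 0 -> continuity_pt f p) ->
  forall x, continuous (fun p => f (clamp p)) x.
Proof.
  intros Hf x. apply continuity_pt_filterlim.
  apply (continuity_pt_comp clamp f x).
  - apply lip_cont with 1; [lra|]. intro y. rewrite Rmult_1_l. apply clamp_lip.
  - apply Hf, clamp_in.
Qed.

Lemma param_deriv (k kd : R -> R -> R) a b q L : a < b -> 0 <= L ->
  (forall x p, a <= p <= b -> is_derive (fun x => k x p) x (kd x p)) ->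
  (forall x y p, a <= p <= b -> Rabs (kd x p - kd y p) <= L * Rabs (x - y)) ->
  (forall x, ex_RInt (k x) a b) -> (forall x, ex_RInt (kd x) a b) ->
  is_derive (fun x => RInt (k x) a b) q (RInt (kd q) a b).
Proof.
  intros Hab HL Hd Hl Hk Hkd. apply is_derive_Reals. intros e He.
  assert (Hdp : 0 < e / ((b - a) * L + 1)).
  { apply Rdiv_lt_0_compat; auto. assert (0 <= (b - a) * L) by (apply Rmult_le_pos; lra). lra. }
  exists (mkposreal _ Hdp). intros h Hh0 Hh. simpl in Hh.
  set (g := fun p => (k (q + h) p - k q p) / h - kd q p).
  assert (Hg : is_RInt g a b ((RInt (k (q + h)) a b - RInt (k q) a b) / h - RInt (kd q) a b)).
  { unfold g. apply (is_RInt_minus (V := R_CompleteNormedModule) (fun p => (k (q + h) p - k q p) / h) (kd q)).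
    - unfold Rdiv. apply (is_RInt_ext (V := R_CompleteNormedModule) (fun p => scal (/ h) (minus (k (q+h) p) (k q p)))).
      { intros; unfold scal, minus, plus, opp; simpl; unfold mult; simpl; ring. }
      replace ((RInt (k (q + h)) a b - RInt (k q) a b) * / h)
        with (scal (/ h) (minus (RInt (k (q + h)) a b) (RInt (k q) a b))).
      2:{ unfold scal, minus, plus, opp; simpl; unfold mult; simpl; ring. }
      apply (is_RInt_scal (V := R_CompleteNormedModule)), (is_RInt_minus (V := R_CompleteNormedModule)); apply (RInt_correct (V := R_CompleteNormedModule)); auto.
    - apply (RInt_correct (V := R_CompleteNormedModule)); auto. }
  rewrite <- (is_RInt_unique _ _ _ _ Hg).
  apply Rle_lt_trans with ((b - a) * (L * Rabs h)).
  - apply abs_RInt_le_const; [lra| eexists; exact Hg |].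
    intros p Hp. unfold g.
    assert (Hm : Rabs ((k (q + h) p - kd q p * (q + h)) - (k q p - kd q p * q)) <= (L * Rabs h) * Rabs ((q + h) - q)).
    { apply (lip_mvt2 (fun x => k x p - kd q p * x) (fun x => kd x p - kd q p) (Rmin q (q+h)) (Rmax q (q+h))).
      - split; [apply Rmin_r | apply Rmax_r].
      - split; [apply Rmin_l | apply Rmax_l].
      - intros t Ht. assert (H1 := Hd t p Hp).
        assert (H2 : is_derive (fun x => kd q p * x) t (kd q p)) by (auto_derive; auto; ring).
        exact (is_derive_minus _ _ _ _ _ H1 H2).
      - intros t Ht. eapply Rle_trans; [apply Hl; auto|].
        apply Rmult_le_compat_l; auto.
        unfold Rmin, Rmax in Ht; destruct Rle_dec; split_Rabs; lra. }
    replace ((q + h) - q) with h in Hm by ring.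
    replace ((k (q + h) p - k q p) / h - kd q p)
      with (((k (q + h) p - kd q p * (q + h)) - (k q p - kd q p * q)) / h) by (field; auto).
    unfold Rdiv. rewrite Rabs_mult, Rabs_inv.
    assert (0 < Rabs h) by (apply Rabs_pos_lt; auto).
    apply Rmult_le_reg_r with (Rabs h); auto. rewrite Rmult_assoc, Rinv_l by lra. lra.
  - assert (0 <= Rabs h) by apply Rabs_pos.
    assert (Hh2 : Rabs h * ((b - a) * L + 1) < e).
    { assert (e / ((b - a) * L + 1) * ((b - a) * L + 1) = e) by (field; nra).
      assert (0 <= (b - a) * L) by (apply Rmult_le_pos; lra). nra. }
    nra.
Qed.

Lemma param_lip (kd : R -> R -> R) a b L : a < b ->
  (forall x y p, a <= p <= b -> Rabs (kd x p - kd y p) <= L * Rabs (x - y)) ->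
  (forall x, ex_RInt (kd x) a b) ->
  forall x y, Rabs (RInt (kd x) a b - RInt (kd y) a b) <= ((b - a) * L) * Rabs (x - y).
Proof.
  intros Hab Hl Hkd x y.
  replace (RInt (kd x) a b - RInt (kd y) a b) with (RInt (fun p => kd x p - kd y p) a b).
  2:{ apply (RInt_minus (kd x) (kd y)); auto. }
  rewrite Rmult_assoc. apply abs_RInt_le_const; [lra| |].
  - apply (ex_RInt_minus (kd x) (kd y)); auto.
  - intros; apply Hl; auto.
Qed.

Definition LU (f : R -> R -> R) : Prop := exists L B, 0 <= L /\
  forall p, -1 <= p <= 0 -> forall x y,
    Rabs (f x p - f y p) <= L * Rabs (x - y) /\ Rabs (f x p) <= B.

Lemma LU_ext f g : (forall x p, -1 <= p <= 0 -> f x p = g x p) -> LU f -> LU g.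
Proof.
  intros He [L [B [HL H]]]. exists L, B. split; auto. intros p Hp x y.
  rewrite <- !He by auto. apply H; auto.
Qed.

Lemma LU_const (g : R -> R) B : (forall p, -1 <= p <= 0 -> Rabs (g p) <= B) ->
  LU (fun _ p => g p).
Proof.
  intros Hb. exists 0, B. split; [lra|]. intros p Hp x y. split.
  - rewrite Rminus_diag, Rabs_R0. lra.
  - auto.
Qed.

Lemma LU_plus f g : LU f -> LU g -> LU (fun x p => f x p + g x p).
Proof.
  intros [L1 [B1 [HL1 H1]]] [L2 [B2 [HL2 H2]]]. exists (L1 + L2), (B1 + B2). split; [lra|].
  intros p Hp x y. destruct (H1 p Hp x y) as [A1 A2]. destruct (H2 p Hp x y) as [A3 A4]. split.
  - replace (f x p + g x p - (f y p + g y p)) with ((f x p - f y p) + (g x p - g y p)) by ring.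
    eapply Rle_trans; [apply Rabs_triang|]. lra.
  - eapply Rle_trans; [apply Rabs_triang|]. lra.
Qed.

Lemma LU_opp f : LU f -> LU (fun x p => - f x p).
Proof.
  intros [L1 [B1 [HL1 H1]]]. exists L1, B1. split; auto.
  intros p Hp x y. destruct (H1 p Hp x y) as [A1 A2]. split.
  - replace (- f x p - - f y p) with (- (f x p - f y p)) by ring. rewrite Rabs_Ropp; auto.
  - rewrite Rabs_Ropp; auto.
Qed.

Lemma LU_mult f g : LU f -> LU g -> LU (fun x p => f x p * g x p).
Proof.
  intros [L1 [B1 [HL1 H1]]] [L2 [B2 [HL2 H2]]].
  assert (HB1 : forall p, -1 <= p <= 0 -> 0 <= B1).
  { intros p Hp. destruct (H1 p Hp 0 0) as [_ A]. eapply Rle_trans; [apply Rabs_pos|exact A]. }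
  assert (HB2 : forall p, -1 <= p <= 0 -> 0 <= B2).
  { intros p Hp. destruct (H2 p Hp 0 0) as [_ A]. eapply Rle_trans; [apply Rabs_pos|exact A]. }
  exists (Rabs B1 * L2 + L1 * Rabs B2), (B1 * B2). split.
  { assert (0 <= Rabs B1 * L2) by (apply Rmult_le_pos; auto; apply Rabs_pos).
    assert (0 <= L1 * Rabs B2) by (apply Rmult_le_pos; auto; apply Rabs_pos). lra. }
  intros p Hp x y. destruct (H1 p Hp x y) as [A1 A2]. destruct (H2 p Hp x y) as [A3 A4].
  destruct (H2 p Hp y x) as [_ A5].
  specialize (HB1 p Hp). specialize (HB2 p Hp).
  rewrite (Rabs_right B1), (Rabs_right B2) by lra. split.
  - replace (f x p * g x p - f y p * g y p) with (f x p * (g x p - g y p) + (f x p - f y p) * g y p) by ring.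
    eapply Rle_trans; [apply Rabs_triang|]. rewrite !Rabs_mult.
    assert (Rabs (f x p) * Rabs (g x p - g y p) <= B1 * (L2 * Rabs (x - y))).
    { apply Rmult_le_compat; auto; apply Rabs_pos. }
    assert (Rabs (f x p - f y p) * Rabs (g y p) <= (L1 * Rabs (x - y)) * B2).
    { apply Rmult_le_compat; auto; apply Rabs_pos. }
    nra.
  - rewrite Rabs_mult. apply Rmult_le_compat; auto; apply Rabs_pos.
Qed.

Lemma LU_inv f c : 0 < c -> (forall x p, -1 <= p <= 0 -> c <= f x p) -> LU f ->
  LU (fun x p => / f x p).
Proof.
  intros Hc Hge [L1 [B1 [HL1 H1]]]. exists (L1 / (c * c)), (/ c). split.
  { apply Rdiv_le_0_compat; auto. nra. }
  intros p Hp x y. destruct (H1 p Hp x y) as [A1 A2].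
  assert (Hx := Hge x p Hp). assert (Hy := Hge y p Hp). split.
  - replace (/ f x p - / f y p) with ((f y p - f x p) / (f x p * f y p)) by (field; lra).
    unfold Rdiv. rewrite Rabs_mult, Rabs_inv, Rabs_minus_sym, Rabs_mult, (Rabs_right (f x p)), (Rabs_right (f y p)) by lra.
    assert (c * c <= f x p * f y p) by nra.
    assert (/ (f x p * f y p) <= / (c * c)) by (apply Rinv_le_contravar; nra).
    assert (0 <= / (f x p * f y p)) by (apply Rlt_le, Rinv_0_lt_compat; nra).
    assert (0 <= Rabs (x - y)) by apply Rabs_pos.
    apply Rle_trans with (L1 * Rabs (x - y) * / (c * c)).
    + apply Rmult_le_compat; auto. apply Rabs_pos.
    + lra.
  - rewrite Rabs_right by (apply Rle_ge, Rlt_le, Rinv_0_lt_compat; lra).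
    apply Rinv_le_contravar; lra.
Qed.

Lemma cR_plus (f g : R -> R) x : continuous f x -> continuous g x -> continuous (fun y => f y + g y) x.
Proof. intros H1 H2. apply continuity_pt_filterlim. apply (continuity_pt_plus f g); apply continuity_pt_filterlim; auto. Qed.
Lemma cR_minus (f g : R -> R) x : continuous f x -> continuous g x -> continuous (fun y => f y - g y) x.
Proof. intros H1 H2. apply continuity_pt_filterlim. apply (continuity_pt_minus f g); apply continuity_pt_filterlim; auto. Qed.
Lemma cR_mult (f g : R -> R) x : continuous f x -> continuous g x -> continuous (fun y => f y * g y) x.
Proof. intros H1 H2. apply continuity_pt_filterlim. apply (continuity_pt_mult f g); apply continuity_pt_filterlim; auto. Qed.
Lemma cR_opp (f : R -> R) x : continuous f x -> continuous (fun y => - f y) x.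
Proof. intros H1. apply continuity_pt_filterlim. apply (continuity_pt_opp f); apply continuity_pt_filterlim; auto. Qed.
Lemma cR_div (f g : R -> R) x : continuous f x -> continuous g x -> g x <> 0 -> continuous (fun y => f y / g y) x.
Proof. intros H1 H2 H3. apply continuity_pt_filterlim. apply (continuity_pt_div f g); auto; apply continuity_pt_filterlim; auto. Qed.
Lemma cR_der (f : R -> R) x : ex_derive f x -> continuous f x.
Proof. intros H. exact (ex_derive_continuous (K := R_AbsRing) (V := R_NormedModule) f x H). Qed.
Lemma cR_pow (f : R -> R) x n : continuous f x -> continuous (fun y => f y ^ n) x.
Proof. intros H. induction n; simpl.
  - apply continuity_pt_filterlim. apply continuity_pt_const. intros a b; auto.
  - apply (cR_mult f (fun y => f y ^ n)); auto. Qed.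
Lemma cpt_der (f : R -> R) x : ex_derive f x -> continuity_pt f x.
Proof. intros H. apply continuity_pt_filterlim. apply cR_der, H. Qed.
Lemma cpt_cont (f : R -> R) x : continuous f x -> continuity_pt f x.
Proof. intros H. apply continuity_pt_filterlim. exact H. Qed.
Lemma cont_cpt (f : R -> R) x : continuity_pt f x -> continuous f x.
Proof. intros H. apply continuity_pt_filterlim. exact H. Qed.
Lemma isd_mult (f g : R -> R) x df dg : is_derive f x df -> is_derive g x dg ->
  is_derive (fun y => f y * g y) x (df * g x + f x * dg).
Proof. intros H1 H2. apply is_derive_Reals. apply (derivable_pt_lim_mult f g); apply is_derive_Reals; auto. Qed.
Lemma isd_minus (f g : R -> R) x df dg : is_derive f x df -> is_derive g x dg ->
  is_derive (fun y => f y - g y) x (df - dg).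
Proof. intros H1 H2. apply is_derive_Reals. apply (derivable_pt_lim_minus f g); apply is_derive_Reals; auto. Qed.
Lemma isd_eq (f : R -> R) x l l' : is_derive f x l -> l = l' -> is_derive f x l'.
Proof. intros H ->; auto. Qed.


Theorem lemma4p3
  (alpha : R) (rho H : R -> R) (w : R -> R -> R) (F : R) (Phi : R -> R)
  (Halpha : 0 < alpha < 1)
  (Hrho : hoelder1 2 alpha rho (-1) 0)
  (Hrho_pos : forall p, -1 <= p <= 0 -> 0 < rho p)
  (Hrho_p : forall p, -1 <= p <= 0 -> Derive rho p <= 0)
  (HH : hoelder1 3 alpha H (-1) 0)
  (HHm1 : H (-1) = 0) (HH0 : H 0 = 1)
  (HHp : forall p, -1 <= p <= 0 -> 0 < Derive H p)
  (HwX : in_X alpha w)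
  (HF : F <> 0)
  (Hsol : height_eq rho H w F)
  (HPhi : is_Phi rho H (/ F^2) Phi) :
  let h := fun q p => H p + w q p in
  is_lim
    (fun M =>
       RInt (fun q => RInt (fun p =>
           (Derive H p ^ 3 * (d_q w q p)^2 + (Derive H p + 2 * d_p h q p) * (d_p w q p)^2)
             / (2 * (d_p h q p)^2 * Derive H p ^ 3) * Derive Phi p) (-1) 0) (-M) M
       + A_coef rho H (/ F^2) Phi * RInt (fun q => w q 0) (-M) M)
    p_infty 0.
Proof.
  intros h.
  destruct HwX as [[Hex [C [HC _]]] [_ [Hdec Hbot]]].
  unfold height_eq in Hsol. cbv zeta in Hsol.
  destruct Hsol as [Heq [Htop [_ [c [Hc Hcp]]]]].
  destruct HPhi as [HPd [Hode [HPm1 HPd1]]].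
  destruct HH as [HHd [CH [HHb _]]].
  destruct Hrho as [Hrd [Cr [Hrb _]]].
  set (mu := / F ^ 2) in *.
  assert (Dq : forall s, (length s < 3)%nat -> forall q p,
             is_derive (fun x => pder s w x p) q (pder (true :: s) w q p)).
  { intros s Hs q p. apply Derive_correct. apply (Hex s Hs q p). }
  assert (Dp : forall s, (length s < 3)%nat -> forall q p,
             is_derive (fun y => pder s w q y) p (pder (false :: s) w q p)).
  { intros s Hs q p. apply Derive_correct. apply (Hex s Hs q p). }
  assert (EHd : forall x, ex_derive H x) by (intro x; apply (HHd 0%nat); lia).
  assert (EHpd : forall x, ex_derive (Derive H) x) by (intro x; apply (HHd 1%nat); lia).
  assert (EHppd : forall x, ex_derive (Derive (Derive H)) x) by (intro x; apply (HHd 2%nat); lia).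
  assert (BHp : forall x, -1 <= x <= 0 -> Rabs (Derive H x) <= CH) by (intros x Hx; apply (HHb 1%nat); auto; lia).
  assert (BHpp : forall x, -1 <= x <= 0 -> Rabs (Derive (Derive H) x) <= CH) by (intros x Hx; apply (HHb 2%nat); auto; lia).
  assert (Erd : forall x, ex_derive rho x) by (intro x; apply (Hrd 0%nat); lia).
  assert (Erpd : forall x, ex_derive (Derive rho) x) by (intro x; apply (Hrd 1%nat); lia).
  assert (Brp : forall x, -1 <= x <= 0 -> Rabs (Derive rho x) <= Cr) by (intros x Hx; apply (Hrb 1%nat); auto; lia).
  assert (dqh : forall x y, d_q h x y = d_q w x y).
  { intros x y. unfold h, d_q. apply is_derive_unique.
    auto_derive. apply (Hex nil ltac:(simpl; lia) x y). ring. }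
  assert (dph : forall x y, d_p h x y = Derive H y + d_p w x y).
  { intros x y. unfold h, d_p. apply is_derive_unique.
    auto_derive. split; [apply EHd|]. split; [apply (Hex nil ltac:(simpl; lia) x y)|auto].
    rewrite !Rmult_1_l; reflexivity. }
  assert (Ewp : forall x y, ex_derive (fun y0 => Derive H y0 + d_p w x y0) y).
  { intros x y. apply (ex_derive_plus (fun y0 => Derive H y0) (fun y0 => d_p w x y0)); auto.
    eexists. apply (Dp (false :: nil) ltac:(simpl; lia) x y). }
  assert (hp_ge : forall x y, -1 <= y <= 0 -> c <= Derive H y + d_p w x y).
  { intros x y Hy.
    destruct (Req_dec y (-1)) as [->|Hy1]; [|destruct (Req_dec y 0) as [->|Hy0]].
    - apply (ge_left (fun y0 => Derive H y0 + d_p w x y0) (-1) 0); [lra| |].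
      + apply cpt_der, Ewp.
      + intros; apply Hcp; auto.
    - apply (ge_right (fun y0 => Derive H y0 + d_p w x y0) (-1) 0); [lra| |].
      + apply cpt_der, Ewp.
      + intros; apply Hcp; auto.
    - apply Hcp; lra. }
  assert (HmuP : 0 < mu).
  { unfold mu. apply Rinv_0_lt_compat.
    destruct (Rtotal_order F 0) as [?|[?|?]]; [nra|contradiction|nra]. }
  destruct (continuity_ab_maj (fun p => Rabs (Phi p)) (-1) 0 ltac:(lra)) as [Mx [HMx _]].
  { intros p _. apply (continuity_pt_comp Phi Rabs). apply cpt_der, HPd. apply Rcontinuity_abs. }
  set (KP := Rabs (Phi Mx)).
  assert (BP : forall p, -1 <= p <= 0 -> Rabs (Phi p) <= KP) by (intros; apply HMx; auto).
  assert (KP0 : 0 <= KP) by apply Rabs_pos.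
  assert (CH0 : 0 <= CH) by (eapply Rle_trans; [apply Rabs_pos|apply (BHp 0); lra]).
  assert (Cr0 : 0 <= Cr) by (eapply Rle_trans; [apply Rabs_pos|apply (Brp 0); lra]).
  set (g := fun y => Derive Phi y / Derive H y ^ 3).
  assert (Dg : forall x, -1 < x < 0 -> is_derive g x (mu * Derive rho x * Phi x)).
  { intros x Hx. destruct (Hode x Hx) as [E1 E2].
    replace (mu * Derive rho x * Phi x) with (Derive g x) by (unfold g; lra).
    apply Derive_correct; exact E1. }
  set (Lg := mu * Cr * KP).
  assert (Lg0 : 0 <= Lg) by (unfold Lg; apply Rmult_le_pos; [apply Rmult_le_pos|]; lra).
  assert (glip : forall x y, -1 < x < 0 -> -1 < y < 0 -> Rabs (g x - g y) <= Lg * Rabs (x - y)).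
  { intros x y Hx Hy.
    apply (lip_mvt2 g (fun t => mu * Derive rho t * Phi t) (Rmin x y) (Rmax x y)).
    - split; [apply Rmin_l|apply Rmax_l].
    - split; [apply Rmin_r|apply Rmax_r].
    - intros t Ht. apply Dg. unfold Rmin, Rmax in Ht; destruct Rle_dec; lra.
    - intros t Ht. assert (-1 <= t <= 0) by (unfold Rmin, Rmax in Ht; destruct Rle_dec; lra).
      rewrite !Rabs_mult, (Rabs_right mu) by lra. unfold Lg.
      apply Rmult_le_compat; try apply Rabs_pos.
      + apply Rmult_le_pos; [lra|apply Rabs_pos].
      + apply Rmult_le_compat_l; [lra|apply Brp; auto].
      + apply BP; auto. }
  set (Bg := Rabs (g (-1/2)) + Lg).
  assert (gb : forall x, -1 < x < 0 -> Rabs (g x) <= Bg).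
  { intros x Hx. assert (A := glip x (-1/2) Hx ltac:(lra)).
    assert (Rabs (x - -1/2) <= 1) by (split_Rabs; lra).
    assert (Lg * Rabs (x - -1/2) <= Lg * 1) by (apply Rmult_le_compat_l; lra).
    replace (g x) with ((g x - g (-1/2)) + g (-1/2)) by ring.
    eapply Rle_trans; [apply Rabs_triang|]. unfold Bg. lra. }
  assert (H3lip : forall x y, -1 <= x <= 0 -> -1 <= y <= 0 ->
     Rabs (Derive H x ^ 3 - Derive H y ^ 3) <= (3 * CH ^ 2 * CH) * Rabs (x - y)).
  { intros x y Hx Hy.
    apply (lip_mvt2 (fun t => Derive H t ^ 3) (fun t => 3 * Derive H t ^ 2 * Derive (Derive H) t) (-1) 0); auto.
    - intros t Ht. auto_derive. apply EHpd. change (fun x0 : R => Derive H x0) with (Derive H). ring.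
    - intros t Ht. rewrite !Rabs_mult, <- RPow_abs, (Rabs_right 3) by lra.
      apply Rmult_le_compat; try apply Rabs_pos.
      + apply Rmult_le_pos; [lra|apply pow_le, Rabs_pos].
      + apply Rmult_le_compat_l; [lra|]. apply pow_incr. split; [apply Rabs_pos|auto].
      + auto. }
  assert (H3b : forall x, -1 <= x <= 0 -> Rabs (Derive H x ^ 3) <= CH ^ 3).
  { intros x Hx. rewrite <- RPow_abs. apply pow_incr. split; [apply Rabs_pos|auto]. }
  set (LP := Lg * CH ^ 3 + Bg * (3 * CH ^ 2 * CH)).
  assert (Bg0 : 0 <= Bg) by (unfold Bg; assert (0 <= Rabs (g (-1/2))) by apply Rabs_pos; lra).
  assert (LP0 : 0 <= LP).
  { unfold LP. assert (0 <= CH ^ 3) by (apply pow_le; lra).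
    assert (0 <= 3 * CH ^ 2 * CH) by (assert (0 <= CH ^2) by (apply pow_le; lra); nra). nra. }
  assert (Plip0 : forall x y, -1 < x < 0 -> -1 < y < 0 ->
     Rabs (Derive Phi x - Derive Phi y) <= LP * Rabs (x - y)).
  { intros x y Hx Hy.
    assert (E : forall t, -1 < t < 0 -> Derive Phi t = g t * Derive H t ^ 3).
    { intros t Ht. unfold g. field. assert (0 < Derive H t) by (apply HHp; lra).
      lra. }
    rewrite (E x Hx), (E y Hy).
    replace (g x * Derive H x ^ 3 - g y * Derive H y ^ 3)
      with ((g x - g y) * Derive H x ^ 3 + g y * (Derive H x ^ 3 - Derive H y ^ 3)) by ring.
    eapply Rle_trans; [apply Rabs_triang|]. rewrite !Rabs_mult.
    assert (A1 := glip x y Hx Hy). assert (A2 := H3b x ltac:(lra)). assert (A3 := gb y Hy).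
    assert (A4 := H3lip x y ltac:(lra) ltac:(lra)).
    assert (Rabs (g x - g y) * Rabs (Derive H x ^ 3) <= (Lg * Rabs (x - y)) * CH ^ 3)
      by (apply Rmult_le_compat; auto; apply Rabs_pos).
    assert (Rabs (g y) * Rabs (Derive H x ^ 3 - Derive H y ^ 3) <= Bg * ((3 * CH ^ 2 * CH) * Rabs (x - y)))
      by (apply Rmult_le_compat; auto; apply Rabs_pos).
    unfold LP. nra. }
  assert (Plip : forall x y, -1 <= x <= 0 -> -1 <= y <= 0 ->
     Rabs (Derive Phi x - Derive Phi y) <= LP * Rabs (x - y)).
  { apply lip_ext; auto; lra. }
  set (Pc := fun y => Derive Phi (clamp y)).
  assert (Pc_cont : forall x, continuous Pc x).
  { intro x. apply cont_cpt. apply lip_cont with LP; auto. intro y. unfold Pc.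
    eapply Rle_trans; [apply Plip; apply clamp_in|].
    apply Rmult_le_compat_l; auto. apply clamp_lip. }
  assert (LUw : forall s, (length s <= 2)%nat -> LU (pder s w)).
  { intros s Hs. exists C, C. split.
    - eapply Rle_trans; [apply Rabs_pos|apply (HC nil ltac:(simpl; lia) 0 0); unfold in_strip; lra].
    - intros p Hp x y. split.
      + apply (lip_mvt2 (fun x => pder s w x p) (fun x => pder (true :: s) w x p) (Rmin x y) (Rmax x y)).
        * split; [apply Rmin_l|apply Rmax_l].
        * split; [apply Rmin_r|apply Rmax_r].
        * intros t _. apply Dq. lia.
        * intros t _. apply HC; [simpl; lia|exact Hp].
      + apply HC; [lia|exact Hp]. }
  set (hp := fun x y => Derive H y + d_p w x y).
  assert (LUhp : LU hp).
  { apply (LU_plus (fun _ y => Derive H y) (pder (false :: nil) w)).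
    apply LU_const with CH; auto. apply LUw; simpl; lia. }
  set (bq := fun x y => (d_q (d_q w) x y * hp x y - d_q w x y * d_q (d_p w) x y) / hp x y ^ 2).
  set (kdf := fun x y => bq x y * Phi y).
  set (kf := fun x y => d_q w x y / hp x y * Phi y).
  assert (hp_ge' : forall x y, -1 <= y <= 0 -> c <= hp x y) by (intros; apply hp_ge; auto).
  assert (LUk : LU kdf).
  { apply (LU_ext (fun x y => ((pder (true :: true :: nil) w x y * hp x y + - (pder (true :: nil) w x y * pder (true :: false :: nil) w x y)) * (/ hp x y * / hp x y)) * Phi y)).
    - intros x y Hy. unfold kdf, bq. simpl. assert (c <= hp x y) by auto. field. lra.
    - apply (LU_mult _ (fun _ y => Phi y)); [|apply LU_const with KP; auto].
      apply LU_mult.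
      + apply (LU_plus (fun x y => pder (true :: true :: nil) w x y * hp x y)
                       (fun x y => - (pder (true :: nil) w x y * pder (true :: false :: nil) w x y))).
        * apply (LU_mult (pder (true :: true :: nil) w) hp); auto; apply LUw; simpl; lia.
        * apply (LU_opp (fun x y => pder (true :: nil) w x y * pder (true :: false :: nil) w x y)).
          apply (LU_mult (pder (true :: nil) w) (pder (true :: false :: nil) w)); apply LUw; simpl; lia.
      + apply (LU_mult (fun x y => / hp x y) (fun x y => / hp x y)); apply LU_inv with c; auto. }
  destruct LUk as [Lk [Bk [Lk0 HLk]]].
  assert (Dkf : forall x p, -1 <= p <= 0 -> is_derive (fun x => kf x p) x (kdf x p)).
  { intros x p Hp. assert (c <= hp x p) by auto. unfold kf, kdf, bq, hp in *.
    auto_derive.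
    - repeat split; try apply (Hex (true :: nil) ltac:(simpl; lia) x p);
        try apply (Hex (false :: nil) ltac:(simpl; lia) x p). lra.
    - change (Derive (fun x0 => d_q w x0 p) x) with (d_q (d_q w) x p).
      change (Derive (fun x0 => d_p w x0 p) x) with (d_q (d_p w) x p).
      field. lra. }
  assert (Ey : forall s, (length s < 3)%nat -> forall x z, ex_derive (fun y => pder s w x y) z)
    by (intros s Hs x z; exact (proj2 (Hex s Hs x z))).
  assert (Ex : forall s, (length s < 3)%nat -> forall x z, ex_derive (fun y => pder s w y x) z)
    by (intros s Hs x z; exact (proj1 (Hex s Hs z x))).
  assert (Xkf : forall x z, -1 <= z <= 0 -> ex_derive (kf x) z).
  { intros x z Hz. assert (c <= hp x z) by (apply hp_ge'; lra). unfold kf, hp in *. auto_derive.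
    split; [apply (Ey (true :: nil)); simpl; lia|].
    split; [apply EHpd|]. split; [apply (Ey (false :: nil)); simpl; lia|].
    split; [lra|]. split; [apply HPd|exact I]. }
  assert (Xkdf : forall x z, -1 <= z <= 0 -> ex_derive (kdf x) z).
  { intros x z Hz. assert (c <= hp x z) by (apply hp_ge'; lra). unfold kdf, bq, hp in *. auto_derive.
    split; [apply (Ey (true :: true :: nil)); simpl; lia|].
    split; [apply EHpd|]. split; [apply (Ey (false :: nil)); simpl; lia|].
    split; [apply (Ey (true :: nil)); simpl; lia|].
    split; [apply (Ey (true :: false :: nil)); simpl; lia|].
    split; [apply EHpd|]. split; [apply (Ey (false :: nil)); simpl; lia|].
    split; [rewrite Rmult_1_r; apply Rmult_integral_contrapositive; lra|]. split; [apply HPd|exact I]. }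
  assert (Ekf : forall x, ex_RInt (kf x) (-1) 0).
  { intro x. apply (ex_RInt_continuous (V := R_CompleteNormedModule)). rewrite Rmin_left, Rmax_right by lra.
    intros z Hz. apply cR_der, Xkf; auto. }
  assert (Ekdf : forall x, ex_RInt (kdf x) (-1) 0).
  { intro x. apply (ex_RInt_continuous (V := R_CompleteNormedModule)). rewrite Rmin_left, Rmax_right by lra.
    intros z Hz. apply cR_der, Xkdf; auto. }
  set (B := fun x => RInt (kf x) (-1) 0).
  set (Bd := fun x => RInt (kdf x) (-1) 0).
  assert (DB : forall q, is_derive B q (Bd q)).
  { intro q. apply (param_deriv kf kdf (-1) 0 q Lk); [lra|exact Lk0|exact Dkf| |exact Ekf|exact Ekdf].
    intros x y p Hp. apply HLk; exact Hp. }
  assert (Bdc : forall x, continuous Bd x).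
  { assert (PL := param_lip kdf (-1) 0 Lk ltac:(lra) ltac:(intros x0 y0 p Hp; apply HLk; exact Hp) Ekdf).
    intro x. apply cont_cpt. apply (lip_cont Bd x ((0 - -1) * Lk)). lra. intro y.
    exact (PL y x). }
  assert (IntBd : forall M, is_RInt Bd (-M) M (B M - B (-M))).
  { intro M. apply (is_RInt_derive (V := R_CompleteNormedModule) B Bd).
    intros; apply DB. intros; apply Bdc. }
  set (Qf := fun q y => (Derive H y ^ 3 * (d_q w q y)^2 + (Derive H y + 2 * hp q y) * (d_p w q y)^2) / (2 * (hp q y)^2 * Derive H y ^ 3)).
  set (af := fun q y => - (1 + (d_q w q y)^2) / (2 * (hp q y)^2) + 1 / (2 * (Derive H y)^2)).
  assert (Xaf : forall q z, -1 <= z <= 0 -> ex_derive (af q) z).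
  { intros x z Hz. assert (c <= hp x z) by (apply hp_ge'; lra). assert (0 < Derive H z) by (apply HHp; lra).
    unfold af, hp in *. auto_derive. repeat match goal with
    | |- _ /\ _ => split
    | |- True => exact I
    | |- ex_derive (fun x0 => d_q (d_q w) _ x0) _ => apply (Ey (true :: true :: nil)); simpl; lia
    | |- ex_derive (fun x0 => d_q (d_p w) _ x0) _ => apply (Ey (true :: false :: nil)); simpl; lia
    | |- ex_derive (fun x0 => d_q w _ x0) _ => apply (Ey (true :: nil)); simpl; lia
    | |- ex_derive (fun x0 => d_p w _ x0) _ => apply (Ey (false :: nil)); simpl; lia
    | |- ex_derive (fun x0 => w _ x0) _ => apply (Ey nil); simpl; lia
    | |- ex_derive (fun x0 => Derive H x0) _ => apply EHpd
    | |- ex_derive (fun x0 => Phi x0) _ => apply HPd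
    | |- _ <> 0 => apply Rgt_not_eq; repeat apply Rmult_lt_0_compat; lra
    end. }
  assert (XQf : forall q z, -1 <= z <= 0 -> ex_derive (Qf q) z).
  { intros x z Hz. assert (c <= hp x z) by (apply hp_ge'; lra). assert (0 < Derive H z) by (apply HHp; lra).
    unfold Qf, hp in *. auto_derive. repeat match goal with
    | |- _ /\ _ => split
    | |- True => exact I
    | |- ex_derive (fun x0 => d_q (d_q w) _ x0) _ => apply (Ey (true :: true :: nil)); simpl; lia
    | |- ex_derive (fun x0 => d_q (d_p w) _ x0) _ => apply (Ey (true :: false :: nil)); simpl; lia
    | |- ex_derive (fun x0 => d_q w _ x0) _ => apply (Ey (true :: nil)); simpl; lia
    | |- ex_derive (fun x0 => d_p w _ x0) _ => apply (Ey (false :: nil)); simpl; lia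
    | |- ex_derive (fun x0 => w _ x0) _ => apply (Ey nil); simpl; lia
    | |- ex_derive (fun x0 => Derive H x0) _ => apply EHpd
    | |- ex_derive (fun x0 => Phi x0) _ => apply HPd
    | |- _ <> 0 => apply Rgt_not_eq; repeat apply Rmult_lt_0_compat; lra
    end. }
  fold h in Heq, Htop.
  assert (Dbq : forall q x, -1 <= x <= 0 -> is_derive (fun x0 => d_q h x0 x / d_p h x0 x) q (bq q x)).
  { intros q x Hx. assert (c <= hp q x) by (apply hp_ge'; lra).
    apply (is_derive_ext (fun x0 => d_q w x0 x / (Derive H x + d_p w x0 x))).
    { intro t. rewrite dqh, dph. reflexivity. }
    unfold bq, hp in *. auto_derive.
    - split; [apply (Ex (true :: nil)); simpl; lia|]. split; [apply (Ex (false :: nil)); simpl; lia|].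
      split; [lra|exact I].
    - change (Derive (fun x0 => d_q w x0 x) q) with (d_q (d_q w) q x).
      change (Derive (fun x0 => d_p w x0 x) q) with (d_q (d_p w) q x).
      field. lra. }
  assert (Daf : forall q x, -1 < x < 0 -> Derive (af q) x = - bq q x + mu * Derive rho x * w q x).
  { intros q x Hx. assert (E := Heq q x Hx).
    rewrite (Derive_ext _ (af q)) in E.
    2:{ intro t. unfold af, hp. rewrite dqh, dph. reflexivity. }
    assert (E2 : Derive (fun x0 : R => d_q h x0 x / d_p h x0 x) q = bq q x)
      by (apply is_derive_unique; apply Dbq; lra).
    rewrite E2 in E.
    unfold h in E. lra. }
  set (P := fun q y => af q y * Phi y - w q y * g y).
  set (Pt := fun q y => af q y * Phi y - w q y * (Pc y / Derive H y ^ 3)).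
  set (dfP := fun q y => - (kdf q (clamp y) + Qf q (clamp y) * Pc y)).
  set (A := A_coef rho H mu Phi).
  assert (Ckc : forall q x, continuous (fun y => kdf q (clamp y)) x).
  { intros q x. apply (clamp_cont (kdf q)). intros p Hp. apply cpt_der, Xkdf; exact Hp. }
  assert (CQc : forall q x, continuous (fun y => Qf q (clamp y) * Pc y) x).
  { intros q x. apply (cR_mult (fun y => Qf q (clamp y)) Pc).
    apply (clamp_cont (Qf q)). intros p Hp. apply cpt_der, XQf; exact Hp. apply Pc_cont. }
  assert (Iq : forall q, RInt (dfP q) (-1) 0 = A * w q 0).
  { intro q. rewrite (ftc_open (P q) (Pt q) (dfP q) (-1) 0).
    - unfold P, g. rewrite HPm1, (Hbot q).
      assert (Ea : af q 0 = mu * rho 0 * w q 0).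
      { assert (E := Htop q). rewrite dqh, dph in E. unfold h in E. rewrite HH0 in E.
        unfold af, hp. lra. }
      rewrite Ea. unfold A, A_coef. assert (0 < Derive H 0) by (apply HHp; lra). change (mu * rho 0 * w q 0 * Phi 0 - w q 0 * (Derive Phi 0 / Derive H 0 ^ 3) - (af q (-1) * 0 - 0 * (Derive Phi (-1) / Derive H (-1) ^ 3)) = (- Derive Phi 0 / Derive H 0 ^ 3 + mu * rho 0 * Phi 0) * w q 0). assert (0 < Derive H (-1)) by (apply HHp; lra). field. lra.
    - lra.
    - intros x Hx. unfold P.
      apply isd_eq with (Derive (af q) x * Phi x + af q x * Derive Phi x
                        - (d_p w q x * g x + w q x * (mu * Derive rho x * Phi x))).
      + apply (isd_minus (fun y => af q y * Phi y) (fun y => w q y * g y)).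
        * apply (isd_mult (af q) Phi). apply Derive_correct, Xaf; lra. apply Derive_correct, HPd.
        * apply (isd_mult (fun y => w q y) g). exact (Dp nil ltac:(simpl; lia) q x). apply Dg; exact Hx.
      + rewrite Daf by exact Hx. unfold dfP, kdf, Qf, af, g, Pc, hp. rewrite clamp_id by lra.
        assert (c <= hp q x) by (apply hp_ge'; lra). assert (0 < Derive H x) by (apply HHp; lra).
        unfold hp in *. match goal with |- @eq _ ?a ?b => change (@eq R a b) end. field. split; lra.
    - intro x. unfold dfP. apply (cR_opp (fun y => kdf q (clamp y) + Qf q (clamp y) * Pc y)).
      apply (cR_plus (fun y => kdf q (clamp y)) (fun y => Qf q (clamp y) * Pc y)); auto.
    - intros x Hx. unfold P, Pt, g, Pc. rewrite clamp_id by exact Hx. reflexivity.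
    - apply cpt_cont. unfold Pt. assert (0 < Derive H (-1)) by (apply HHp; lra).
      apply (cR_minus (fun y => af q y * Phi y) (fun y => w q y * (Pc y / Derive H y ^ 3))).
      + apply (cR_mult (af q) Phi); apply cR_der; [apply Xaf; lra|apply HPd].
      + apply (cR_mult (fun y => w q y) (fun y => Pc y / Derive H y ^ 3)).
        apply cR_der. exact (Ey nil ltac:(simpl; lia) q (-1)).
        apply (cR_div Pc (fun y => Derive H y ^ 3)). apply Pc_cont.
        apply (cR_pow (Derive H)). apply cR_der, EHpd. apply pow_nonzero. lra.
    - apply cpt_cont. unfold Pt. assert (0 < Derive H 0) by (apply HHp; lra).
      apply (cR_minus (fun y => af q y * Phi y) (fun y => w q y * (Pc y / Derive H y ^ 3))).
      + apply (cR_mult (af q) Phi); apply cR_der; [apply Xaf; lra|apply HPd].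
      + apply (cR_mult (fun y => w q y) (fun y => Pc y / Derive H y ^ 3)).
        apply cR_der. exact (Ey nil ltac:(simpl; lia) q 0).
        apply (cR_div Pc (fun y => Derive H y ^ 3)). apply Pc_cont.
        apply (cR_pow (Derive H)). apply cR_der, EHpd. apply pow_nonzero. lra. }
  assert (Ist : forall q, RInt (fun p => (Derive H p ^ 3 * (d_q w q p)^2 + (Derive H p + 2 * d_p h q p) * (d_p w q p)^2) / (2 * (d_p h q p)^2 * Derive H p ^ 3) * Derive Phi p) (-1) 0 = - A * w q 0 - Bd q).
  { intro q.
    assert (E1 : ex_RInt (fun y => kdf q (clamp y)) (-1) 0).
    { apply (ex_RInt_continuous (V := R_CompleteNormedModule)). intros; apply Ckc. }
    assert (E2 : ex_RInt (fun y => Qf q (clamp y) * Pc y) (-1) 0).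
    { apply (ex_RInt_continuous (V := R_CompleteNormedModule)). intros; apply CQc. }
    assert (S1 : RInt (dfP q) (-1) 0 = - (RInt (fun y => kdf q (clamp y)) (-1) 0 + RInt (fun y => Qf q (clamp y) * Pc y) (-1) 0)).
    { rewrite <- (RInt_plus (V := R_CompleteNormedModule) (fun y => kdf q (clamp y)) (fun y => Qf q (clamp y) * Pc y)) by assumption.
      rewrite <- (RInt_opp (V := R_CompleteNormedModule) (fun y => plus (kdf q (clamp y)) (Qf q (clamp y) * Pc y))).
      reflexivity. apply (ex_RInt_plus (V := R_CompleteNormedModule) (fun y => kdf q (clamp y)) (fun y => Qf q (clamp y) * Pc y)); assumption. }
    assert (S2 : RInt (fun y => kdf q (clamp y)) (-1) 0 = Bd q).
    { apply (RInt_ext (V := R_CompleteNormedModule)). rewrite Rmin_left, Rmax_right by lra.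
      intros x Hx. rewrite clamp_id by lra. reflexivity. }
    assert (S3 : RInt (fun p => (Derive H p ^ 3 * (d_q w q p)^2 + (Derive H p + 2 * d_p h q p) * (d_p w q p)^2) / (2 * (d_p h q p)^2 * Derive H p ^ 3) * Derive Phi p) (-1) 0
                 = RInt (fun y => Qf q (clamp y) * Pc y) (-1) 0).
    { apply (RInt_ext (V := R_CompleteNormedModule)). rewrite Rmin_left, Rmax_right by lra.
      intros x Hx. unfold Qf, Pc, hp. rewrite clamp_id by lra. rewrite dph. reflexivity. }
    rewrite S3. rewrite Iq, S2 in S1. lra. }
  assert (Ew0 : forall M, ex_RInt (fun q => w q 0) (-M) M).
  { intro M. apply (ex_RInt_continuous (V := R_CompleteNormedModule)). intros z _.
    apply cR_der. exact (Ex nil ltac:(simpl; lia) 0 z). }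
  assert (Expr : forall M,
       RInt (fun q => RInt (fun p =>
           (Derive H p ^ 3 * (d_q w q p)^2 + (Derive H p + 2 * d_p h q p) * (d_p w q p)^2)
             / (2 * (d_p h q p)^2 * Derive H p ^ 3) * Derive Phi p) (-1) 0) (-M) M
       + A * RInt (fun q => w q 0) (-M) M = - (B M - B (-M))).
  { intro M. rewrite (RInt_ext (V := R_CompleteNormedModule) _ (fun q => minus (scal (- A) (w q 0)) (Bd q))).
    2:{ intros x _. rewrite Ist. unfold minus, plus, opp, scal; simpl; unfold mult; simpl. ring. }
    rewrite (is_RInt_unique (V := R_CompleteNormedModule) _ (-M) M (minus (scal (- A) (RInt (fun q => w q 0) (-M) M)) (B M - B (-M)))).
    - unfold minus, plus, opp, scal; simpl; unfold mult; simpl. ring.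
    - apply (is_RInt_minus (V := R_CompleteNormedModule)).
      + apply (is_RInt_scal (V := R_CompleteNormedModule)). apply (RInt_correct (V := R_CompleteNormedModule)). apply Ew0.
      + apply IntBd. }
  assert (Bbound : forall e, 0 < e -> exists K, forall x, K < Rabs x -> Rabs (B x) <= e / c * KP).
  { intros e He. destruct (Hdec e He) as [K HK]. exists K. intros x Hx.
    replace (e / c * KP) with ((0 - -1) * (e / c * KP)) by ring.
    apply abs_RInt_le_const; [lra|apply Ekf|]. intros t Ht.
    assert (Hw := HK (true :: nil) ltac:(simpl; lia) x t Hx Ht). simpl in Hw.
    assert (Hh := hp_ge' x t Ht).
    unfold kf. rewrite Rabs_mult. apply Rmult_le_compat; try apply Rabs_pos; [|apply BP; exact Ht].
    unfold Rdiv. rewrite Rabs_mult, Rabs_inv, (Rabs_right (hp x t)) by lra.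
    apply Rmult_le_compat; try apply Rabs_pos; [apply Rlt_le, Rinv_0_lt_compat; lra | lra |].
    apply Rinv_le_contravar; lra. }
  apply is_lim_spec. intros eps. simpl.
  set (e' := eps * c / (2 * (KP + 1))).
  assert (He' : 0 < e') by (unfold e'; apply Rdiv_lt_0_compat; [apply Rmult_lt_0_compat; [apply cond_pos|lra]|lra]).
  destruct (Bbound e' He') as [K HK]. exists (Rabs K). intros M HM.
  rewrite Expr.
  assert (B1 := HK M ltac:(assert (K <= Rabs K) by apply Rle_abs; rewrite Rabs_right by (assert (0 <= Rabs K) by apply Rabs_pos; lra); lra)).
  assert (B2 := HK (- M) ltac:(assert (K <= Rabs K) by apply Rle_abs; rewrite Rabs_Ropp, Rabs_right by (assert (0 <= Rabs K) by apply Rabs_pos; lra); lra)).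
  assert (Hb : e' / c * KP * 2 < eps).
  { unfold e'. assert (0 < eps) by apply cond_pos.
    replace (eps * c / (2 * (KP + 1)) / c * KP * 2) with (eps * (KP / (KP + 1))) by (field; lra).
    assert (KP / (KP + 1) < 1) by (apply (Rmult_lt_reg_r (KP + 1)); [lra|]; unfold Rdiv; rewrite Rmult_assoc, Rinv_l by lra; lra).
    nra. }
  replace (- (B M - B (- M)) - 0) with (- B M + B (- M)) by ring.
  eapply Rle_lt_trans; [apply Rabs_triang|]. rewrite Rabs_Ropp. lra.
Qed.
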